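(* Each of the formulas D1 $=i(x,x)$, D2 $=i(i(x,x),i(n(x),n(x)))$, D3 $=i(i(x,x),i(i(y,y),i(i(x,y),i(x,y))))$ has a double-negation-free condensed-detachment proof from the axioms H1 $=i(x,i(y,x))$, H2 $=i(i(x,i(y,z)),i(i(x,y),i(x,z)))$, H3 $=i(i(x,n(x)),n(x))$, H4 $=i(x,i(n(x),y))$.
   Context: Formulas are terms built from propositional variables using the binary connective $i$ (implication) and the unary connective $n$ (negation). Condensed detachment: from a major premiss $i(A,B)$ and a minor premiss $C$, after renaming variables so that the two premisses share no variables, if $A$ and $C$ are unifiable with most general unifier $\sigma$, infer $B\sigma$; alphabetic variants of axioms count as axioms and conclusions may be renamed. A proof is double-negation free if none of its deduced (non-axiom) steps has a subformula of the form $n(n(t))$. *)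

(* Defs.v *)
From Stdlib Require Import List.
Import ListNotations.

Inductive form : Type :=
| Var : nat -> form
| Imp : form -> form -> form
| Neg : form -> form.

Fixpoint subst (s : nat -> form) (F : form) : form :=
  match F with
  | Var v => s v
  | Imp A B => Imp (subst s A) (subst s B)
  | Neg A => Neg (subst s A)
  end.

Fixpoint occurs (v : nat) (F : form) : Prop :=
  match F with
  | Var w => v = w
  | Imp A B => occurs v A \/ occurs v B
  | Neg A => occurs v A
  end.

Definition variant (F G : form) : Prop :=
  exists r r' : nat -> nat,
    subst (fun v => Var (r v)) F = G /\ subst (fun v => Var (r' v)) G = F.

Definition is_mgu (s : nat -> form) (A C : form) : Prop :=
  subst s A = subst s C /\
  forall t : nat -> form, subst t A = subst t C ->
    exists u : nat -> form, forall v, t v = subst u (s v).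

Definition cd_step (M N F : form) : Prop :=
  exists A B C s,
    variant M (Imp A B) /\ variant N C /\
    (forall v, occurs v (Imp A B) -> ~ occurs v C) /\
    is_mgu s A C /\ variant (subst s B) F.

Fixpoint subformula (G F : form) : Prop :=
  G = F \/
  match F with
  | Var _ => False
  | Imp A B => subformula G A \/ subformula G B
  | Neg A => subformula G A
  end.

Definition dn_free (F : form) : Prop :=
  forall t, ~ subformula (Neg (Neg t)) F.

Definition x := Var 0.
Definition y := Var 1.
Definition z := Var 2.

Definition H1 := Imp x (Imp y x).
Definition H2 := Imp (Imp x (Imp y z)) (Imp (Imp x y) (Imp x z)).
Definition H3 := Imp (Imp x (Neg x)) (Neg x).
Definition H4 := Imp x (Imp (Neg x) y).
Definition axioms : list form := [H1; H2; H3; H4].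

Inductive dnf_provable : form -> Prop :=
| dnf_ax : forall a F, In a axioms -> variant a F -> dnf_provable F
| dnf_cd : forall M N F, dnf_provable M -> dnf_provable N ->
    cd_step M N F -> dn_free F -> dnf_provable F.

Definition D1 := Imp x x.
Definition D2 := Imp (Imp x x) (Imp (Neg x) (Neg x)).
Definition D3 := Imp (Imp x x) (Imp (Imp y y) (Imp (Imp x y) (Imp x y))).

(* Main.v *)
Require Import Defs.
From Stdlib Require Import List Arith Lia.
Import ListNotations.

Fixpoint lk (l : list (nat * form)) (v : nat) : option form :=
  match l with
  | [] => None
  | (k, f) :: l' => if Nat.eqb k v then Some f else lk l' v
  end.
Definition sl l v := match lk l v with Some f => f | None => Var v end.
Fixpoint lkn (l : list (nat * nat)) (v : nat) : nat :=
  match l with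
  | [] => v
  | (k, w) :: l' => if Nat.eqb k v then w else lkn l' v
  end.
Definition rn l v := Var (lkn l v).
Definition sh (N : form) := subst (fun v => Var (v + 100)) N.
Fixpoint maxv (F : form) : nat :=
  match F with Var v => v | Imp A B => Nat.max (maxv A) (maxv B) | Neg A => maxv A end.
Fixpoint dnb (F : form) : bool :=
  match F with
  | Var _ => true
  | Imp A B => dnb A && dnb B
  | Neg (Neg _) => false
  | Neg A => dnb A
  end.

Lemma dnb_ok F : dnb F = true -> dn_free F.
Proof.
  unfold dn_free. induction F as [v|A IHA B IHB|A IHA]; intros H t Hs; simpl in Hs.
  - destruct Hs as [Hs|[]]; discriminate.
  - simpl in H. apply andb_prop in H as [H1' H2'].
    destruct Hs as [Hs|[Hs|Hs]]; [discriminate|eapply IHA; eauto|eapply IHB; eauto].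
  - destruct A as [w|A1 A2|A1]; [ | | discriminate].
    + destruct Hs as [Hs|Hs]; [discriminate|]. destruct Hs as [Hs|[]]; discriminate.
    + destruct Hs as [Hs|Hs]; [discriminate|]. eapply IHA; eauto.
Qed.

Lemma subst_id F : subst (fun v => Var v) F = F.
Proof. induction F; simpl; congruence. Qed.
Lemma subst_comp s t F : subst s (subst t F) = subst (fun v => subst s (t v)) F.
Proof. induction F; simpl; congruence. Qed.
Lemma subst_ext s t F : (forall v, s v = t v) -> subst s F = subst t F.
Proof. intro H; induction F; simpl; congruence. Qed.
Lemma occ_max v F : occurs v F -> v <= maxv F.
Proof. induction F; simpl; intuition lia. Qed.
Lemma occ_sh v F : occurs v (sh F) -> 100 <= v.
Proof. unfold sh; induction F; simpl; intuition lia. Qed.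
Lemma lk_in l v f : lk l v = Some f -> In (v, f) l.
Proof.
  induction l as [|[k g] l IH]; simpl; [discriminate|].
  destruct (Nat.eqb_spec k v); intro H; [inversion H; subst; left; reflexivity|right; auto].
Qed.

Lemma ax_intro a F : In a axioms -> subst (fun v => Var v) a = F -> dnf_provable F.
Proof.
  intros Hi He. apply (dnf_ax a F Hi). exists (fun v => v), (fun v => v).
  split; [exact He|]. subst F. rewrite subst_id. apply subst_id.
Qed.

Lemma cd_intro {M N F} A B l r1 r2 :
  M = Imp A B -> Nat.ltb (maxv (Imp A B)) 100 = true ->
  subst (sl l) A = subst (sl l) (sh N) ->
  (forall t, subst t A = subst t (sh N) -> Forall (fun p => t (fst p) = subst t (snd p)) l) ->
  subst (rn r1) (subst (sl l) B) = F -> subst (rn r2) F = subst (sl l) B ->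
  cd_step M N F.
Proof.
  intros HM Hlt Hu Hf H1' H2'.
  exists A, B, (sh N), (sl l). split; [|split; [|split; [|split]]].
  - subst M. exists (fun v => v), (fun v => v). rewrite !subst_id. auto.
  - exists (fun v => v + 100), (fun v => v - 100). split; [reflexivity|].
    unfold sh. rewrite subst_comp. rewrite <- (subst_id N) at 2.
    apply subst_ext. intro v. simpl. f_equal. lia.
  - apply Nat.ltb_lt in Hlt. intros v Ho Hc. apply occ_max in Ho. apply occ_sh in Hc. lia.
  - split; [exact Hu|]. intros t Ht. exists t. intro v. unfold sl.
    destruct (lk l v) as [f|] eqn:E; [|reflexivity].
    apply lk_in in E. specialize (Hf t Ht). rewrite Forall_forall in Hf.
    apply (Hf _ E).
  - exists (lkn r1), (lkn r2). split; assumption.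
Qed.

Ltac solve_forall :=
  let t := fresh "t" in let Ht := fresh "Ht" in
  intros t Ht; cbn in Ht; try (injection Ht; intros);
  repeat (apply Forall_cons; [cbn; congruence|]); apply Forall_nil.

Lemma p0 : dnf_provable (Imp (Imp (Var 0) (Imp (Var 1) (Var 2))) (Imp (Imp (Var 0) (Var 1)) (Imp (Var 0) (Var 2)))).
Proof. apply (ax_intro H2); [simpl; tauto|reflexivity]. Qed.

Lemma p1 : dnf_provable (Imp (Var 0) (Imp (Var 1) (Var 0))).
Proof. apply (ax_intro H1); [simpl; tauto|reflexivity]. Qed.

Lemma p2 : dnf_provable (Imp (Imp (Var 0) (Var 1)) (Imp (Var 0) (Var 0))).
Proof.
  apply (dnf_cd (Imp (Imp (Var 0) (Imp (Var 1) (Var 2))) (Imp (Imp (Var 0) (Var 1)) (Imp (Var 0) (Var 2)))) (Imp (Var 0) (Imp (Var 1) (Var 0)))); [exact p0|exact p1| |apply dnb_ok; reflexivity].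
  apply (cd_intro (Imp (Var 0) (Imp (Var 1) (Var 2))) (Imp (Imp (Var 0) (Var 1)) (Imp (Var 0) (Var 2))) [(0, (Var 100)); (1, (Var 101)); (2, (Var 100))] [(100,0); (101,1)] [(0,100); (1,101)]); [reflexivity|reflexivity|reflexivity|solve_forall|reflexivity|reflexivity].
Qed.

Lemma p3 : dnf_provable (Imp (Var 0) (Var 0)).
Proof.
  apply (dnf_cd (Imp (Imp (Var 0) (Var 1)) (Imp (Var 0) (Var 0))) (Imp (Var 0) (Imp (Var 1) (Var 0)))); [exact p2|exact p1| |apply dnb_ok; reflexivity].
  apply (cd_intro (Imp (Var 0) (Var 1)) (Imp (Var 0) (Var 0)) [(0, (Var 100)); (1, (Imp (Var 101) (Var 100)))] [(100,0)] [(0,100)]); [reflexivity|reflexivity|reflexivity|solve_forall|reflexivity|reflexivity].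
Qed.

Lemma p4 : dnf_provable (Imp (Var 0) (Imp (Imp (Var 1) (Var 2)) (Imp (Var 1) (Var 1)))).
Proof.
  apply (dnf_cd (Imp (Var 0) (Imp (Var 1) (Var 0))) (Imp (Imp (Var 0) (Var 1)) (Imp (Var 0) (Var 0)))); [exact p1|exact p2| |apply dnb_ok; reflexivity].
  apply (cd_intro (Var 0) (Imp (Var 1) (Var 0)) [(0, (Imp (Imp (Var 100) (Var 101)) (Imp (Var 100) (Var 100))))] [(1,0); (100,1); (101,2)] [(0,1); (1,100); (2,101)]); [reflexivity|reflexivity|reflexivity|solve_forall|reflexivity|reflexivity].
Qed.

Lemma p5 : dnf_provable (Imp (Imp (Var 0) (Imp (Var 1) (Var 2))) (Imp (Var 0) (Imp (Var 1) (Var 1)))).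
Proof.
  apply (dnf_cd (Imp (Imp (Var 0) (Imp (Var 1) (Var 2))) (Imp (Imp (Var 0) (Var 1)) (Imp (Var 0) (Var 2)))) (Imp (Var 0) (Imp (Imp (Var 1) (Var 2)) (Imp (Var 1) (Var 1))))); [exact p0|exact p4| |apply dnb_ok; reflexivity].
  apply (cd_intro (Imp (Var 0) (Imp (Var 1) (Var 2))) (Imp (Imp (Var 0) (Var 1)) (Imp (Var 0) (Var 2))) [(0, (Var 100)); (1, (Imp (Var 101) (Var 102))); (2, (Imp (Var 101) (Var 101)))] [(100,0); (101,1); (102,2)] [(0,100); (1,101); (2,102)]); [reflexivity|reflexivity|reflexivity|solve_forall|reflexivity|reflexivity].
Qed.

Lemma p6 : dnf_provable (Imp (Imp (Imp (Var 0) (Var 1)) (Var 0)) (Imp (Imp (Var 0) (Var 1)) (Var 0))).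
Proof.
  apply (dnf_cd (Imp (Imp (Var 0) (Imp (Var 1) (Var 2))) (Imp (Imp (Var 0) (Var 1)) (Imp (Var 0) (Var 2)))) (Imp (Imp (Var 0) (Var 1)) (Imp (Var 0) (Var 0)))); [exact p0|exact p2| |apply dnb_ok; reflexivity].
  apply (cd_intro (Imp (Var 0) (Imp (Var 1) (Var 2))) (Imp (Imp (Var 0) (Var 1)) (Imp (Var 0) (Var 2))) [(0, (Imp (Var 100) (Var 101))); (1, (Var 100)); (2, (Var 100))] [(100,0); (101,1)] [(0,100); (1,101)]); [reflexivity|reflexivity|reflexivity|solve_forall|reflexivity|reflexivity].
Qed.

Lemma p7 : dnf_provable (Imp (Var 0) (Imp (Var 1) (Var 1))).
Proof.
  apply (dnf_cd (Imp (Var 0) (Imp (Var 1) (Var 0))) (Imp (Var 0) (Var 0))); [exact p1|exact p3| |apply dnb_ok; reflexivity].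
  apply (cd_intro (Var 0) (Imp (Var 1) (Var 0)) [(0, (Imp (Var 100) (Var 100)))] [(1,0); (100,1)] [(0,1); (1,100)]); [reflexivity|reflexivity|reflexivity|solve_forall|reflexivity|reflexivity].
Qed.

Lemma p8 : dnf_provable (Imp (Imp (Imp (Var 0) (Var 0)) (Var 1)) (Imp (Var 0) (Var 0))).
Proof.
  apply (dnf_cd (Imp (Imp (Imp (Var 0) (Var 1)) (Var 0)) (Imp (Imp (Var 0) (Var 1)) (Var 0))) (Imp (Var 0) (Imp (Var 1) (Var 1)))); [exact p6|exact p7| |apply dnb_ok; reflexivity].
  apply (cd_intro (Imp (Imp (Var 0) (Var 1)) (Var 0)) (Imp (Imp (Var 0) (Var 1)) (Var 0)) [(0, (Imp (Var 101) (Var 101))); (100, (Imp (Imp (Var 101) (Var 101)) (Var 1)))] [(101,0); (1,1)] [(0,101); (1,1)]); [reflexivity|reflexivity|reflexivity|solve_forall|reflexivity|reflexivity].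
Qed.

Lemma p9 : dnf_provable (Imp (Imp (Var 0) (Var 0)) (Imp (Var 0) (Var 0))).
Proof.
  apply (dnf_cd (Imp (Imp (Imp (Var 0) (Var 0)) (Var 1)) (Imp (Var 0) (Var 0))) (Imp (Imp (Imp (Var 0) (Var 0)) (Var 1)) (Imp (Var 0) (Var 0)))); [exact p8|exact p8| |apply dnb_ok; reflexivity].
  apply (cd_intro (Imp (Imp (Var 0) (Var 0)) (Var 1)) (Imp (Var 0) (Var 0)) [(0, (Imp (Var 100) (Var 100))); (1, (Imp (Var 100) (Var 100))); (101, (Imp (Var 100) (Var 100)))] [(100,0)] [(0,100)]); [reflexivity|reflexivity|reflexivity|solve_forall|reflexivity|reflexivity].
Qed.

Lemma p10 : dnf_provable (Imp (Var 0) (Imp (Var 1) (Imp (Var 2) (Var 1)))).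
Proof.
  apply (dnf_cd (Imp (Var 0) (Imp (Var 1) (Var 0))) (Imp (Var 0) (Imp (Var 1) (Var 0)))); [exact p1|exact p1| |apply dnb_ok; reflexivity].
  apply (cd_intro (Var 0) (Imp (Var 1) (Var 0)) [(0, (Imp (Var 100) (Imp (Var 101) (Var 100))))] [(1,0); (100,1); (101,2)] [(0,1); (1,100); (2,101)]); [reflexivity|reflexivity|reflexivity|solve_forall|reflexivity|reflexivity].
Qed.

Lemma p11 : dnf_provable (Imp (Imp (Var 0) (Imp (Var 1) (Var 0))) (Imp (Var 0) (Imp (Var 1) (Var 0)))).
Proof.
  apply (dnf_cd (Imp (Imp (Var 0) (Var 0)) (Imp (Var 0) (Var 0))) (Imp (Var 0) (Imp (Var 1) (Imp (Var 2) (Var 1))))); [exact p9|exact p10| |apply dnb_ok; reflexivity].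
  apply (cd_intro (Imp (Var 0) (Var 0)) (Imp (Var 0) (Var 0)) [(0, (Imp (Var 101) (Imp (Var 102) (Var 101)))); (100, (Imp (Var 101) (Imp (Var 102) (Var 101))))] [(101,0); (102,1)] [(0,101); (1,102)]); [reflexivity|reflexivity|reflexivity|solve_forall|reflexivity|reflexivity].
Qed.

Lemma p12 : dnf_provable (Imp (Imp (Var 0) (Var 1)) (Imp (Var 1) (Imp (Var 0) (Var 1)))).
Proof.
  apply (dnf_cd (Imp (Imp (Var 0) (Imp (Var 1) (Var 0))) (Imp (Var 0) (Imp (Var 1) (Var 0)))) (Imp (Var 0) (Imp (Var 1) (Imp (Var 2) (Var 1))))); [exact p11|exact p10| |apply dnb_ok; reflexivity].
  apply (cd_intro (Imp (Var 0) (Imp (Var 1) (Var 0))) (Imp (Var 0) (Imp (Var 1) (Var 0))) [(0, (Imp (Var 102) (Var 101))); (1, (Var 101)); (100, (Imp (Var 102) (Var 101)))] [(102,0); (101,1)] [(0,102); (1,101)]); [reflexivity|reflexivity|reflexivity|solve_forall|reflexivity|reflexivity].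
Qed.

Lemma p13 : dnf_provable (Imp (Imp (Imp (Var 0) (Var 1)) (Var 0)) (Imp (Imp (Var 0) (Var 1)) (Var 1))).
Proof.
  apply (dnf_cd (Imp (Imp (Var 0) (Imp (Var 1) (Var 2))) (Imp (Imp (Var 0) (Var 1)) (Imp (Var 0) (Var 2)))) (Imp (Var 0) (Var 0))); [exact p0|exact p3| |apply dnb_ok; reflexivity].
  apply (cd_intro (Imp (Var 0) (Imp (Var 1) (Var 2))) (Imp (Imp (Var 0) (Var 1)) (Imp (Var 0) (Var 2))) [(0, (Imp (Var 1) (Var 2))); (100, (Imp (Var 1) (Var 2)))] [(1,0); (2,1)] [(0,1); (1,2)]); [reflexivity|reflexivity|reflexivity|solve_forall|reflexivity|reflexivity].
Qed.

Lemma p14 : dnf_provable (Imp (Imp (Imp (Var 0) (Var 0)) (Var 1)) (Var 1)).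
Proof.
  apply (dnf_cd (Imp (Imp (Imp (Var 0) (Var 1)) (Var 0)) (Imp (Imp (Var 0) (Var 1)) (Var 1))) (Imp (Var 0) (Imp (Var 1) (Var 1)))); [exact p13|exact p7| |apply dnb_ok; reflexivity].
  apply (cd_intro (Imp (Imp (Var 0) (Var 1)) (Var 0)) (Imp (Imp (Var 0) (Var 1)) (Var 1)) [(0, (Imp (Var 101) (Var 101))); (100, (Imp (Imp (Var 101) (Var 101)) (Var 1)))] [(101,0); (1,1)] [(0,101); (1,1)]); [reflexivity|reflexivity|reflexivity|solve_forall|reflexivity|reflexivity].
Qed.

Lemma p15 : dnf_provable (Imp (Imp (Imp (Var 0) (Var 0)) (Imp (Var 1) (Var 2))) (Imp (Var 1) (Var 1))).
Proof.
  apply (dnf_cd (Imp (Imp (Var 0) (Imp (Var 1) (Var 2))) (Imp (Var 0) (Imp (Var 1) (Var 1)))) (Imp (Imp (Imp (Var 0) (Var 0)) (Var 1)) (Var 1))); [exact p5|exact p14| |apply dnb_ok; reflexivity].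
  apply (cd_intro (Imp (Var 0) (Imp (Var 1) (Var 2))) (Imp (Var 0) (Imp (Var 1) (Var 1))) [(0, (Imp (Imp (Var 100) (Var 100)) (Imp (Var 1) (Var 2)))); (101, (Imp (Var 1) (Var 2)))] [(100,0); (1,1); (2,2)] [(0,100); (1,1); (2,2)]); [reflexivity|reflexivity|reflexivity|solve_forall|reflexivity|reflexivity].
Qed.

Lemma p16 : dnf_provable (Imp (Imp (Imp (Var 0) (Var 0)) (Imp (Var 0) (Var 1))) (Imp (Var 0) (Var 1))).
Proof.
  apply (dnf_cd (Imp (Imp (Imp (Var 0) (Var 1)) (Var 0)) (Imp (Imp (Var 0) (Var 1)) (Var 1))) (Imp (Imp (Imp (Var 0) (Var 0)) (Imp (Var 1) (Var 2))) (Imp (Var 1) (Var 1)))); [exact p13|exact p15| |apply dnb_ok; reflexivity].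
  apply (cd_intro (Imp (Imp (Var 0) (Var 1)) (Var 0)) (Imp (Imp (Var 0) (Var 1)) (Var 1)) [(0, (Imp (Var 101) (Var 101))); (1, (Imp (Var 101) (Var 102))); (100, (Var 101))] [(101,0); (102,1)] [(0,101); (1,102)]); [reflexivity|reflexivity|reflexivity|solve_forall|reflexivity|reflexivity].
Qed.

Lemma p17 : dnf_provable (Imp (Imp (Var 0) (Var 1)) (Imp (Var 0) (Imp (Var 2) (Var 1)))).
Proof.
  apply (dnf_cd (Imp (Imp (Var 0) (Imp (Var 1) (Var 2))) (Imp (Imp (Var 0) (Var 1)) (Imp (Var 0) (Var 2)))) (Imp (Var 0) (Imp (Var 1) (Imp (Var 2) (Var 1))))); [exact p0|exact p10| |apply dnb_ok; reflexivity].
  apply (cd_intro (Imp (Var 0) (Imp (Var 1) (Var 2))) (Imp (Imp (Var 0) (Var 1)) (Imp (Var 0) (Var 2))) [(0, (Var 100)); (1, (Var 101)); (2, (Imp (Var 102) (Var 101)))] [(100,0); (101,1); (102,2)] [(0,100); (1,101); (2,102)]); [reflexivity|reflexivity|reflexivity|solve_forall|reflexivity|reflexivity].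
Qed.

Lemma p18 : dnf_provable (Imp (Var 0) (Imp (Neg (Var 0)) (Var 1))).
Proof. apply (ax_intro H4); [simpl; tauto|reflexivity]. Qed.

Lemma p19 : dnf_provable (Imp (Var 0) (Imp (Var 1) (Imp (Neg (Var 1)) (Var 2)))).
Proof.
  apply (dnf_cd (Imp (Var 0) (Imp (Var 1) (Var 0))) (Imp (Var 0) (Imp (Neg (Var 0)) (Var 1)))); [exact p1|exact p18| |apply dnb_ok; reflexivity].
  apply (cd_intro (Var 0) (Imp (Var 1) (Var 0)) [(0, (Imp (Var 100) (Imp (Neg (Var 100)) (Var 101))))] [(1,0); (100,1); (101,2)] [(0,1); (1,100); (2,101)]); [reflexivity|reflexivity|reflexivity|solve_forall|reflexivity|reflexivity].
Qed.

Lemma p20 : dnf_provable (Imp (Imp (Neg (Var 0)) (Var 1)) (Imp (Var 0) (Imp (Neg (Var 0)) (Var 1)))).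
Proof.
  apply (dnf_cd (Imp (Imp (Var 0) (Imp (Var 1) (Var 0))) (Imp (Var 0) (Imp (Var 1) (Var 0)))) (Imp (Var 0) (Imp (Var 1) (Imp (Neg (Var 1)) (Var 2))))); [exact p11|exact p19| |apply dnb_ok; reflexivity].
  apply (cd_intro (Imp (Var 0) (Imp (Var 1) (Var 0))) (Imp (Var 0) (Imp (Var 1) (Var 0))) [(0, (Imp (Neg (Var 101)) (Var 102))); (1, (Var 101)); (100, (Imp (Neg (Var 101)) (Var 102)))] [(101,0); (102,1)] [(0,101); (1,102)]); [reflexivity|reflexivity|reflexivity|solve_forall|reflexivity|reflexivity].
Qed.

Lemma p21 : dnf_provable (Imp (Imp (Neg (Var 0)) (Var 1)) (Imp (Var 0) (Var 0))).
Proof.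
  apply (dnf_cd (Imp (Imp (Var 0) (Imp (Var 1) (Var 2))) (Imp (Var 0) (Imp (Var 1) (Var 1)))) (Imp (Imp (Neg (Var 0)) (Var 1)) (Imp (Var 0) (Imp (Neg (Var 0)) (Var 1))))); [exact p5|exact p20| |apply dnb_ok; reflexivity].
  apply (cd_intro (Imp (Var 0) (Imp (Var 1) (Var 2))) (Imp (Var 0) (Imp (Var 1) (Var 1))) [(0, (Imp (Neg (Var 100)) (Var 101))); (1, (Var 100)); (2, (Imp (Neg (Var 100)) (Var 101)))] [(100,0); (101,1)] [(0,100); (1,101)]); [reflexivity|reflexivity|reflexivity|solve_forall|reflexivity|reflexivity].
Qed.

Lemma p22 : dnf_provable (Imp (Imp (Neg (Var 0)) (Var 1)) (Imp (Var 2) (Imp (Var 0) (Var 0)))).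
Proof.
  apply (dnf_cd (Imp (Imp (Var 0) (Var 1)) (Imp (Var 0) (Imp (Var 2) (Var 1)))) (Imp (Imp (Neg (Var 0)) (Var 1)) (Imp (Var 0) (Var 0)))); [exact p17|exact p21| |apply dnb_ok; reflexivity].
  apply (cd_intro (Imp (Var 0) (Var 1)) (Imp (Var 0) (Imp (Var 2) (Var 1))) [(0, (Imp (Neg (Var 100)) (Var 101))); (1, (Imp (Var 100) (Var 100)))] [(100,0); (101,1); (2,2)] [(0,100); (1,101); (2,2)]); [reflexivity|reflexivity|reflexivity|solve_forall|reflexivity|reflexivity].
Qed.

Lemma p23 : dnf_provable (Imp (Neg (Var 0)) (Imp (Var 0) (Var 0))).
Proof.
  apply (dnf_cd (Imp (Imp (Imp (Var 0) (Var 0)) (Imp (Var 0) (Var 1))) (Imp (Var 0) (Var 1))) (Imp (Imp (Neg (Var 0)) (Var 1)) (Imp (Var 2) (Imp (Var 0) (Var 0))))); [exact p16|exact p22| |apply dnb_ok; reflexivity].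
  apply (cd_intro (Imp (Imp (Var 0) (Var 0)) (Imp (Var 0) (Var 1))) (Imp (Var 0) (Var 1)) [(0, (Neg (Var 100))); (1, (Imp (Var 100) (Var 100))); (101, (Neg (Var 100))); (102, (Neg (Var 100)))] [(100,0)] [(0,100)]); [reflexivity|reflexivity|reflexivity|solve_forall|reflexivity|reflexivity].
Qed.

Lemma p24 : dnf_provable (Imp (Imp (Var 0) (Var 0)) (Imp (Neg (Var 0)) (Imp (Var 0) (Var 0)))).
Proof.
  apply (dnf_cd (Imp (Imp (Var 0) (Var 1)) (Imp (Var 1) (Imp (Var 0) (Var 1)))) (Imp (Neg (Var 0)) (Imp (Var 0) (Var 0)))); [exact p12|exact p23| |apply dnb_ok; reflexivity].
  apply (cd_intro (Imp (Var 0) (Var 1)) (Imp (Var 1) (Imp (Var 0) (Var 1))) [(0, (Neg (Var 100))); (1, (Imp (Var 100) (Var 100)))] [(100,0)] [(0,100)]); [reflexivity|reflexivity|reflexivity|solve_forall|reflexivity|reflexivity].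
Qed.

Lemma p25 : dnf_provable (Imp (Imp (Var 0) (Var 0)) (Imp (Neg (Var 0)) (Neg (Var 0)))).
Proof.
  apply (dnf_cd (Imp (Imp (Var 0) (Imp (Var 1) (Var 2))) (Imp (Var 0) (Imp (Var 1) (Var 1)))) (Imp (Imp (Var 0) (Var 0)) (Imp (Neg (Var 0)) (Imp (Var 0) (Var 0))))); [exact p5|exact p24| |apply dnb_ok; reflexivity].
  apply (cd_intro (Imp (Var 0) (Imp (Var 1) (Var 2))) (Imp (Var 0) (Imp (Var 1) (Var 1))) [(0, (Imp (Var 100) (Var 100))); (1, (Neg (Var 100))); (2, (Imp (Var 100) (Var 100)))] [(100,0)] [(0,100)]); [reflexivity|reflexivity|reflexivity|solve_forall|reflexivity|reflexivity].
Qed.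

Lemma p26 : dnf_provable (Imp (Var 0) (Imp (Imp (Var 1) (Imp (Var 2) (Var 3))) (Imp (Imp (Var 1) (Var 2)) (Imp (Var 1) (Var 3))))).
Proof.
  apply (dnf_cd (Imp (Var 0) (Imp (Var 1) (Var 0))) (Imp (Imp (Var 0) (Imp (Var 1) (Var 2))) (Imp (Imp (Var 0) (Var 1)) (Imp (Var 0) (Var 2))))); [exact p1|exact p0| |apply dnb_ok; reflexivity].
  apply (cd_intro (Var 0) (Imp (Var 1) (Var 0)) [(0, (Imp (Imp (Var 100) (Imp (Var 101) (Var 102))) (Imp (Imp (Var 100) (Var 101)) (Imp (Var 100) (Var 102)))))] [(1,0); (100,1); (101,2); (102,3)] [(0,1); (1,100); (2,101); (3,102)]); [reflexivity|reflexivity|reflexivity|solve_forall|reflexivity|reflexivity].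
Qed.

Lemma p27 : dnf_provable (Imp (Imp (Var 0) (Imp (Var 1) (Imp (Var 2) (Var 3)))) (Imp (Var 0) (Imp (Imp (Var 1) (Var 2)) (Imp (Var 1) (Var 3))))).
Proof.
  apply (dnf_cd (Imp (Imp (Var 0) (Imp (Var 1) (Var 2))) (Imp (Imp (Var 0) (Var 1)) (Imp (Var 0) (Var 2)))) (Imp (Var 0) (Imp (Imp (Var 1) (Imp (Var 2) (Var 3))) (Imp (Imp (Var 1) (Var 2)) (Imp (Var 1) (Var 3)))))); [exact p0|exact p26| |apply dnb_ok; reflexivity].
  apply (cd_intro (Imp (Var 0) (Imp (Var 1) (Var 2))) (Imp (Imp (Var 0) (Var 1)) (Imp (Var 0) (Var 2))) [(0, (Var 100)); (1, (Imp (Var 101) (Imp (Var 102) (Var 103)))); (2, (Imp (Imp (Var 101) (Var 102)) (Imp (Var 101) (Var 103))))] [(100,0); (101,1); (102,2); (103,3)] [(0,100); (1,101); (2,102); (3,103)]); [reflexivity|reflexivity|reflexivity|solve_forall|reflexivity|reflexivity].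
Qed.

Lemma p28 : dnf_provable (Imp (Imp (Var 0) (Var 1)) (Imp (Imp (Var 2) (Var 0)) (Imp (Var 2) (Var 1)))).
Proof.
  apply (dnf_cd (Imp (Imp (Var 0) (Imp (Var 1) (Imp (Var 2) (Var 3)))) (Imp (Var 0) (Imp (Imp (Var 1) (Var 2)) (Imp (Var 1) (Var 3))))) (Imp (Var 0) (Imp (Var 1) (Var 0)))); [exact p27|exact p1| |apply dnb_ok; reflexivity].
  apply (cd_intro (Imp (Var 0) (Imp (Var 1) (Imp (Var 2) (Var 3)))) (Imp (Var 0) (Imp (Imp (Var 1) (Var 2)) (Imp (Var 1) (Var 3)))) [(0, (Imp (Var 2) (Var 3))); (1, (Var 101)); (100, (Imp (Var 2) (Var 3)))] [(2,0); (3,1); (101,2)] [(0,2); (1,3); (2,101)]); [reflexivity|reflexivity|reflexivity|solve_forall|reflexivity|reflexivity].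
Qed.

Lemma p29 : dnf_provable (Imp (Imp (Var 0) (Var 1)) (Imp (Var 2) (Imp (Imp (Var 3) (Var 0)) (Imp (Var 3) (Var 1))))).
Proof.
  apply (dnf_cd (Imp (Imp (Var 0) (Var 1)) (Imp (Var 0) (Imp (Var 2) (Var 1)))) (Imp (Imp (Var 0) (Var 1)) (Imp (Imp (Var 2) (Var 0)) (Imp (Var 2) (Var 1))))); [exact p17|exact p28| |apply dnb_ok; reflexivity].
  apply (cd_intro (Imp (Var 0) (Var 1)) (Imp (Var 0) (Imp (Var 2) (Var 1))) [(0, (Imp (Var 100) (Var 101))); (1, (Imp (Imp (Var 102) (Var 100)) (Imp (Var 102) (Var 101))))] [(100,0); (101,1); (2,2); (102,3)] [(0,100); (1,101); (2,2); (3,102)]); [reflexivity|reflexivity|reflexivity|solve_forall|reflexivity|reflexivity].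
Qed.

Lemma p30 : dnf_provable (Imp (Imp (Var 0) (Var 1)) (Imp (Imp (Var 2) (Imp (Var 3) (Var 0))) (Imp (Var 2) (Imp (Var 3) (Var 1))))).
Proof.
  apply (dnf_cd (Imp (Imp (Var 0) (Imp (Var 1) (Imp (Var 2) (Var 3)))) (Imp (Var 0) (Imp (Imp (Var 1) (Var 2)) (Imp (Var 1) (Var 3))))) (Imp (Imp (Var 0) (Var 1)) (Imp (Var 2) (Imp (Imp (Var 3) (Var 0)) (Imp (Var 3) (Var 1)))))); [exact p27|exact p29| |apply dnb_ok; reflexivity].
  apply (cd_intro (Imp (Var 0) (Imp (Var 1) (Imp (Var 2) (Var 3)))) (Imp (Var 0) (Imp (Imp (Var 1) (Var 2)) (Imp (Var 1) (Var 3)))) [(0, (Imp (Var 100) (Var 101))); (1, (Var 102)); (2, (Imp (Var 103) (Var 100))); (3, (Imp (Var 103) (Var 101)))] [(100,0); (101,1); (102,2); (103,3)] [(0,100); (1,101); (2,102); (3,103)]); [reflexivity|reflexivity|reflexivity|solve_forall|reflexivity|reflexivity].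
Qed.

Lemma p31 : dnf_provable (Imp (Imp (Imp (Var 0) (Var 1)) (Imp (Var 2) (Imp (Var 3) (Var 0)))) (Imp (Imp (Var 0) (Var 1)) (Imp (Var 2) (Imp (Var 3) (Var 1))))).
Proof.
  apply (dnf_cd (Imp (Imp (Var 0) (Imp (Var 1) (Var 2))) (Imp (Imp (Var 0) (Var 1)) (Imp (Var 0) (Var 2)))) (Imp (Imp (Var 0) (Var 1)) (Imp (Imp (Var 2) (Imp (Var 3) (Var 0))) (Imp (Var 2) (Imp (Var 3) (Var 1)))))); [exact p0|exact p30| |apply dnb_ok; reflexivity].
  apply (cd_intro (Imp (Var 0) (Imp (Var 1) (Var 2))) (Imp (Imp (Var 0) (Var 1)) (Imp (Var 0) (Var 2))) [(0, (Imp (Var 100) (Var 101))); (1, (Imp (Var 102) (Imp (Var 103) (Var 100)))); (2, (Imp (Var 102) (Imp (Var 103) (Var 101))))] [(100,0); (101,1); (102,2); (103,3)] [(0,100); (1,101); (2,102); (3,103)]); [reflexivity|reflexivity|reflexivity|solve_forall|reflexivity|reflexivity].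
Qed.

Lemma p32 : dnf_provable (Imp (Var 0) (Imp (Imp (Imp (Var 1) (Var 2)) (Imp (Var 3) (Imp (Var 4) (Var 1)))) (Imp (Imp (Var 1) (Var 2)) (Imp (Var 3) (Imp (Var 4) (Var 2)))))).
Proof.
  apply (dnf_cd (Imp (Var 0) (Imp (Var 1) (Var 0))) (Imp (Imp (Imp (Var 0) (Var 1)) (Imp (Var 2) (Imp (Var 3) (Var 0)))) (Imp (Imp (Var 0) (Var 1)) (Imp (Var 2) (Imp (Var 3) (Var 1)))))); [exact p1|exact p31| |apply dnb_ok; reflexivity].
  apply (cd_intro (Var 0) (Imp (Var 1) (Var 0)) [(0, (Imp (Imp (Imp (Var 100) (Var 101)) (Imp (Var 102) (Imp (Var 103) (Var 100)))) (Imp (Imp (Var 100) (Var 101)) (Imp (Var 102) (Imp (Var 103) (Var 101))))))] [(1,0); (100,1); (101,2); (102,3); (103,4)] [(0,1); (1,100); (2,101); (3,102); (4,103)]); [reflexivity|reflexivity|reflexivity|solve_forall|reflexivity|reflexivity].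
Qed.

Lemma p33 : dnf_provable (Imp (Imp (Var 0) (Imp (Imp (Var 1) (Var 2)) (Imp (Var 3) (Imp (Var 4) (Var 1))))) (Imp (Var 0) (Imp (Imp (Var 1) (Var 2)) (Imp (Var 3) (Imp (Var 4) (Var 2)))))).
Proof.
  apply (dnf_cd (Imp (Imp (Var 0) (Imp (Var 1) (Var 2))) (Imp (Imp (Var 0) (Var 1)) (Imp (Var 0) (Var 2)))) (Imp (Var 0) (Imp (Imp (Imp (Var 1) (Var 2)) (Imp (Var 3) (Imp (Var 4) (Var 1)))) (Imp (Imp (Var 1) (Var 2)) (Imp (Var 3) (Imp (Var 4) (Var 2))))))); [exact p0|exact p32| |apply dnb_ok; reflexivity].
  apply (cd_intro (Imp (Var 0) (Imp (Var 1) (Var 2))) (Imp (Imp (Var 0) (Var 1)) (Imp (Var 0) (Var 2))) [(0, (Var 100)); (1, (Imp (Imp (Var 101) (Var 102)) (Imp (Var 103) (Imp (Var 104) (Var 101))))); (2, (Imp (Imp (Var 101) (Var 102)) (Imp (Var 103) (Imp (Var 104) (Var 102)))))] [(100,0); (101,1); (102,2); (103,3); (104,4)] [(0,100); (1,101); (2,102); (3,103); (4,104)]); [reflexivity|reflexivity|reflexivity|solve_forall|reflexivity|reflexivity].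
Qed.

Lemma p34 : dnf_provable (Imp (Imp (Imp (Var 0) (Var 1)) (Imp (Var 2) (Var 0))) (Imp (Imp (Var 0) (Var 1)) (Imp (Var 2) (Var 1)))).
Proof.
  apply (dnf_cd (Imp (Imp (Var 0) (Imp (Var 1) (Var 2))) (Imp (Imp (Var 0) (Var 1)) (Imp (Var 0) (Var 2)))) (Imp (Imp (Var 0) (Var 1)) (Imp (Imp (Var 2) (Var 0)) (Imp (Var 2) (Var 1))))); [exact p0|exact p28| |apply dnb_ok; reflexivity].
  apply (cd_intro (Imp (Var 0) (Imp (Var 1) (Var 2))) (Imp (Imp (Var 0) (Var 1)) (Imp (Var 0) (Var 2))) [(0, (Imp (Var 100) (Var 101))); (1, (Imp (Var 102) (Var 100))); (2, (Imp (Var 102) (Var 101)))] [(100,0); (101,1); (102,2)] [(0,100); (1,101); (2,102)]); [reflexivity|reflexivity|reflexivity|solve_forall|reflexivity|reflexivity].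
Qed.

Lemma p35 : dnf_provable (Imp (Var 0) (Imp (Imp (Imp (Var 1) (Var 2)) (Imp (Var 3) (Var 1))) (Imp (Imp (Var 1) (Var 2)) (Imp (Var 3) (Var 2))))).
Proof.
  apply (dnf_cd (Imp (Var 0) (Imp (Var 1) (Var 0))) (Imp (Imp (Imp (Var 0) (Var 1)) (Imp (Var 2) (Var 0))) (Imp (Imp (Var 0) (Var 1)) (Imp (Var 2) (Var 1))))); [exact p1|exact p34| |apply dnb_ok; reflexivity].
  apply (cd_intro (Var 0) (Imp (Var 1) (Var 0)) [(0, (Imp (Imp (Imp (Var 100) (Var 101)) (Imp (Var 102) (Var 100))) (Imp (Imp (Var 100) (Var 101)) (Imp (Var 102) (Var 101)))))] [(1,0); (100,1); (101,2); (102,3)] [(0,1); (1,100); (2,101); (3,102)]); [reflexivity|reflexivity|reflexivity|solve_forall|reflexivity|reflexivity].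
Qed.

Lemma p36 : dnf_provable (Imp (Imp (Var 0) (Imp (Imp (Var 1) (Var 2)) (Imp (Var 3) (Var 1)))) (Imp (Var 0) (Imp (Imp (Var 1) (Var 2)) (Imp (Var 3) (Var 2))))).
Proof.
  apply (dnf_cd (Imp (Imp (Var 0) (Imp (Var 1) (Var 2))) (Imp (Imp (Var 0) (Var 1)) (Imp (Var 0) (Var 2)))) (Imp (Var 0) (Imp (Imp (Imp (Var 1) (Var 2)) (Imp (Var 3) (Var 1))) (Imp (Imp (Var 1) (Var 2)) (Imp (Var 3) (Var 2)))))); [exact p0|exact p35| |apply dnb_ok; reflexivity].
  apply (cd_intro (Imp (Var 0) (Imp (Var 1) (Var 2))) (Imp (Imp (Var 0) (Var 1)) (Imp (Var 0) (Var 2))) [(0, (Var 100)); (1, (Imp (Imp (Var 101) (Var 102)) (Imp (Var 103) (Var 101)))); (2, (Imp (Imp (Var 101) (Var 102)) (Imp (Var 103) (Var 102))))] [(100,0); (101,1); (102,2); (103,3)] [(0,100); (1,101); (2,102); (3,103)]); [reflexivity|reflexivity|reflexivity|solve_forall|reflexivity|reflexivity].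
Qed.

Lemma p37 : dnf_provable (Imp (Imp (Var 0) (Var 0)) (Imp (Var 1) (Imp (Var 0) (Var 0)))).
Proof.
  apply (dnf_cd (Imp (Imp (Var 0) (Var 1)) (Imp (Var 0) (Imp (Var 2) (Var 1)))) (Imp (Imp (Var 0) (Var 0)) (Imp (Var 0) (Var 0)))); [exact p17|exact p9| |apply dnb_ok; reflexivity].
  apply (cd_intro (Imp (Var 0) (Var 1)) (Imp (Var 0) (Imp (Var 2) (Var 1))) [(0, (Imp (Var 100) (Var 100))); (1, (Imp (Var 100) (Var 100)))] [(100,0); (2,1)] [(0,100); (1,2)]); [reflexivity|reflexivity|reflexivity|solve_forall|reflexivity|reflexivity].
Qed.

Lemma p38 : dnf_provable (Imp (Imp (Var 0) (Var 0)) (Imp (Imp (Var 0) (Var 1)) (Imp (Var 0) (Var 1)))).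
Proof.
  apply (dnf_cd (Imp (Imp (Var 0) (Imp (Imp (Var 1) (Var 2)) (Imp (Var 3) (Var 1)))) (Imp (Var 0) (Imp (Imp (Var 1) (Var 2)) (Imp (Var 3) (Var 2))))) (Imp (Imp (Var 0) (Var 0)) (Imp (Var 1) (Imp (Var 0) (Var 0))))); [exact p36|exact p37| |apply dnb_ok; reflexivity].
  apply (cd_intro (Imp (Var 0) (Imp (Imp (Var 1) (Var 2)) (Imp (Var 3) (Var 1)))) (Imp (Var 0) (Imp (Imp (Var 1) (Var 2)) (Imp (Var 3) (Var 2)))) [(0, (Imp (Var 100) (Var 100))); (1, (Var 100)); (3, (Var 100)); (101, (Imp (Var 100) (Var 2)))] [(100,0); (2,1)] [(0,100); (1,2)]); [reflexivity|reflexivity|reflexivity|solve_forall|reflexivity|reflexivity].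
Qed.

Lemma p39 : dnf_provable (Imp (Imp (Var 0) (Var 0)) (Imp (Var 1) (Imp (Imp (Var 0) (Var 2)) (Imp (Var 0) (Var 2))))).
Proof.
  apply (dnf_cd (Imp (Imp (Var 0) (Var 1)) (Imp (Var 0) (Imp (Var 2) (Var 1)))) (Imp (Imp (Var 0) (Var 0)) (Imp (Imp (Var 0) (Var 1)) (Imp (Var 0) (Var 1))))); [exact p17|exact p38| |apply dnb_ok; reflexivity].
  apply (cd_intro (Imp (Var 0) (Var 1)) (Imp (Var 0) (Imp (Var 2) (Var 1))) [(0, (Imp (Var 100) (Var 100))); (1, (Imp (Imp (Var 100) (Var 101)) (Imp (Var 100) (Var 101))))] [(100,0); (2,1); (101,2)] [(0,100); (1,2); (2,101)]); [reflexivity|reflexivity|reflexivity|solve_forall|reflexivity|reflexivity].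
Qed.

Lemma p40 : dnf_provable (Imp (Imp (Var 0) (Var 0)) (Imp (Imp (Var 1) (Var 2)) (Imp (Imp (Var 0) (Var 1)) (Imp (Var 0) (Var 2))))).
Proof.
  apply (dnf_cd (Imp (Imp (Var 0) (Imp (Imp (Var 1) (Var 2)) (Imp (Var 3) (Imp (Var 4) (Var 1))))) (Imp (Var 0) (Imp (Imp (Var 1) (Var 2)) (Imp (Var 3) (Imp (Var 4) (Var 2)))))) (Imp (Imp (Var 0) (Var 0)) (Imp (Var 1) (Imp (Imp (Var 0) (Var 2)) (Imp (Var 0) (Var 2)))))); [exact p33|exact p39| |apply dnb_ok; reflexivity].
  apply (cd_intro (Imp (Var 0) (Imp (Imp (Var 1) (Var 2)) (Imp (Var 3) (Imp (Var 4) (Var 1))))) (Imp (Var 0) (Imp (Imp (Var 1) (Var 2)) (Imp (Var 3) (Imp (Var 4) (Var 2))))) [(0, (Imp (Var 100) (Var 100))); (1, (Var 102)); (3, (Imp (Var 100) (Var 102))); (4, (Var 100)); (101, (Imp (Var 102) (Var 2)))] [(100,0); (102,1); (2,2)] [(0,100); (1,102); (2,2)]); [reflexivity|reflexivity|reflexivity|solve_forall|reflexivity|reflexivity].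
Qed.

Lemma p41 : dnf_provable (Imp (Imp (Var 0) (Var 0)) (Imp (Imp (Var 1) (Var 1)) (Imp (Imp (Var 0) (Var 1)) (Imp (Var 0) (Var 1))))).
Proof.
  apply (dnf_cd (Imp (Imp (Var 0) (Imp (Imp (Var 1) (Var 2)) (Imp (Var 3) (Imp (Var 4) (Var 1))))) (Imp (Var 0) (Imp (Imp (Var 1) (Var 2)) (Imp (Var 3) (Imp (Var 4) (Var 2)))))) (Imp (Imp (Var 0) (Var 0)) (Imp (Imp (Var 1) (Var 2)) (Imp (Imp (Var 0) (Var 1)) (Imp (Var 0) (Var 2)))))); [exact p33|exact p40| |apply dnb_ok; reflexivity].
  apply (cd_intro (Imp (Var 0) (Imp (Imp (Var 1) (Var 2)) (Imp (Var 3) (Imp (Var 4) (Var 1))))) (Imp (Var 0) (Imp (Imp (Var 1) (Var 2)) (Imp (Var 3) (Imp (Var 4) (Var 2))))) [(0, (Imp (Var 100) (Var 100))); (1, (Var 102)); (2, (Var 102)); (3, (Imp (Var 100) (Var 102))); (4, (Var 100)); (101, (Var 102))] [(100,0); (102,1)] [(0,100); (1,102)]); [reflexivity|reflexivity|reflexivity|solve_forall|reflexivity|reflexivity].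
Qed.

Theorem lemma7 : dnf_provable D1 /\ dnf_provable D2 /\ dnf_provable D3.
Proof. split; [exact p3|split; [exact p25|exact p41]]. Qed.
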